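(* Let $\nu$ be a pseudorandom measure on $\mathbb{F}_{q^N}$. For every $m\ge1$ there is a constant $C(m)$, independent of $N$, such that if $0\le\phi_1,\dots,\phi_m\le\nu$, then $\|\mathcal{D}_{K-1}\phi_1\cdots\mathcal{D}_{K-1}\phi_m\|^*_{U^{K-1}}\le C(m)$.
   Context: Fix a prime power $q$, $k\ge1$, $K=q^k$. $\mathbb{F}_{q^N}$ is the set of polynomials in $\mathbb{F}_q[t]$ of degree $<N$ with multiplication modulo a fixed monic irreducible of degree $N$. Gowers norm: $\|\phi\|_{U^d}=\big(\mathbb{E}_{x,h_1,\dots,h_d}\prod_{\omega\in\{0,1\}^d}\mathcal{C}^{|\omega|}\phi(x+\omega\cdot h)\big)^{1/2^d}$. Dual function: for real $\phi$, $\mathcal{D}_d\phi(x)=\mathbb{E}_{h_1,\dots,h_d\in\mathbb{F}_{q^N}}\prod_{\omega\in\{0,1\}^d\setminus\{0\}}\phi(x+\omega_1h_1+\dots+\omega_dh_d)$. Dual norm: $\|g\|^*_{U^{d}}=\sup\{|\langle g,h\rangle|:\|h\|_{U^d}\le1\}$ with $\langle g,h\rangle=\mathbb{E}_x g(x)h(x)$. A measure is a family $\nu_N:\mathbb{F}_{q^N}\to[0,\infty)$. Linear forms condition $(m_0,n_0,k_0)$: for $m\le m_0$ affine forms $\psi_i(\mathbf f)=\sum_{j=1}^nL_{ij}f_j+b_i$ in $n\le n_0$ variables with $L_{ij}\in\{a/c:a,c$ polynomials of degree $<k_0$, $c\ne0\}$ and no two coefficient vectors proportional, $\mathbb{E}(\prod_i\nu(\psi_i(\mathbf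 f)))=1+o(1)$ uniformly in the $b_i$. Correlation condition $l_0$: there is $\tau$ with $\mathbb{E}(\tau^p)=O_p(1)$ for all $p>1$ uniformly in $N$ such that for $l\le l_0$, $\mathbb{E}(\nu(f+h_1)\cdots\nu(f+h_l)\mid f)\le\sum_{1\le i<j\le l}\tau(h_i-h_j)$. Pseudorandom: $(K2^{K-1},3K-4,k)$-linear forms and $2^{K-1}$-correlation conditions. *)

(* Defs.v *)
From HB Require Import structures.
From mathcomp Require Import all_boot all_order all_algebra.
From mathcomp Require Import all_classical all_reals.
From mathcomp Require Import constructive_ereal ereal exp.
Set Implicit Arguments. Unset Strict Implicit. Unset Printing Implicit Defensive.
Import Order.TTheory GRing.Theory Num.Theory.
Local Open Scope ring_scope.
Local Open Scope classical_set_scope.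

Definition avg (R : realType) (T : finType) (f : T -> R) : R :=
  (#|T|%:R)^-1 * \sum_(x : T) f x.

Definition cube_pt (G : zmodType) (d : nat) (x : G) (h : {ffun 'I_d -> G})
  (w : {ffun 'I_d -> bool}) : G := x + \sum_(i < d | w i) h i.

(* E_{x,h_1..h_d} prod_{omega in {0,1}^d} phi(x + omega.h)  (real phi, so the
   conjugations C^{|omega|} are trivial) *)
Definition gowers_avg (R : realType) (T : finZmodType) (d : nat) (phi : T -> R) : R :=
  avg (fun x : T => avg (fun h : {ffun 'I_d -> T} =>
    \prod_(w : {ffun 'I_d -> bool}) phi (cube_pt x h w))).

Definition gowers_norm (R : realType) (T : finZmodType) (d : nat) (phi : T -> R) : R :=
  powR (gowers_avg d phi) ((2 ^ d)%:R)^-1.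

Definition dual_fun (R : realType) (T : finZmodType) (d : nat) (phi : T -> R) (x : T) : R :=
  avg (fun h : {ffun 'I_d -> T} =>
    \prod_(w : {ffun 'I_d -> bool} | w != [ffun=> false]) phi (cube_pt x h w)).

Definition inner (R : realType) (T : finType) (g h : T -> R) : R :=
  avg (fun x => g x * h x).

Definition dual_norm (R : realType) (T : finZmodType) (d : nat) (g : T -> R) : \bar R :=
  ereal_sup [set (`|inner g h|)%:E | h in [set h : T -> R | gowers_norm d h <= 1]].

(* F_{q^N} := polynomials of degree < N with multiplication mod P N *)
Notation FqN P N := {poly %/ (P N)}.

(* l is of the form a/c with a, c in F_q[t] of degree < k0, c <> 0 (degree < k0
   means size <= k0; a = 0 is allowed), computed in F_{q^N}. *)
Definition coeff_ok (F : finFieldType) (P : nat -> {poly F}) (N k0 : nat)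
  (l : FqN P N) : Prop :=
  exists a c : {poly F}, [/\ (size a <= k0)%N, (size c <= k0)%N, c != 0 &
    l = in_qpoly (P N) a / in_qpoly (P N) c].

Definition proportional (T : ringType) (n : nat) (u v : 'I_n -> T) : Prop :=
  (exists l : T, forall j, u j = l * v j) \/ (exists l : T, forall j, v j = l * u j).

Definition linear_forms_cond (R : realType) (F : finFieldType) (P : nat -> {poly F})
  (nu : forall N, FqN P N -> R) (m0 n0 k0 : nat) : Prop :=
  forall eps : R, 0 < eps -> exists N0 : nat, forall N, (N0 <= N)%N -> (0 < N)%N ->
  forall m n : nat, (m <= m0)%N -> (n <= n0)%N ->
  forall (L : 'I_m -> 'I_n -> FqN P N) (b : 'I_m -> FqN P N),
    (forall i j, @coeff_ok F P N k0 (L i j)) ->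
    (forall i, exists j, L i j != 0) ->
    (forall i i', i != i' -> ~ proportional (L i) (L i')) ->
    `| avg (fun f : {ffun 'I_n -> FqN P N} =>
          \prod_(i < m) nu N (\sum_(j < n) L i j * f j + b i)) - 1 | <= eps.

Definition correlation_cond (R : realType) (F : finFieldType) (P : nat -> {poly F})
  (nu : forall N, FqN P N -> R) (l0 : nat) : Prop :=
  exists tau : forall N, FqN P N -> R,
  [/\ forall N x, 0 <= tau N x,
      forall p : R, 1 < p -> exists Cp : R, forall N, (0 < N)%N ->
        avg (fun x : FqN P N => powR (tau N x) p) <= Cp &
      forall N, (0 < N)%N -> forall l : nat, (2 <= l <= l0)%N ->
      forall h : 'I_l -> FqN P N,
        avg (fun f : FqN P N => \prod_(i < l) nu N (f + h i))
          <= \sum_(i < l) \sum_(j < l | (i < j)%N) tau N (h i - h j)].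

Definition pseudorandom (R : realType) (F : finFieldType) (k : nat) (P : nat -> {poly F})
  (nu : forall N, FqN P N -> R) : Prop :=
  let K := (#|F| ^ k)%N in
  [/\ forall N x, 0 <= nu N x,
      linear_forms_cond nu (K * 2 ^ (K - 1)) (3 * K - 4) k &
      correlation_cond nu (2 ^ (K - 1))].

(* Main.v *)
Require Import Defs.
From HB Require Import structures.
From mathcomp Require Import all_boot all_order all_algebra.
From mathcomp Require Import all_classical all_reals.
From mathcomp Require Import constructive_ereal ereal exp.
From mathcomp Require Import lra zify.
Import Order.TTheory GRing.Theory Num.Theory.
Local Open Scope ring_scope.
Set Implicit Arguments. Unset Strict Implicit. Unset Printing Implicit Defensive.


Section Avg.
Variable R : realType.

Lemma avgD (T : finType) (f g : T -> R) :
  avg (fun x => f x + g x) = avg f + avg g.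
Proof. by rewrite /avg big_split mulrDr. Qed.

Lemma avgZ (T : finType) (c : R) (f : T -> R) :
  avg (fun x => c * f x) = c * avg f.
Proof. by rewrite /avg -mulr_sumr mulrCA. Qed.

Lemma avgZr (T : finType) (c : R) (f : T -> R) :
  avg (fun x => f x * c) = avg f * c.
Proof. by rewrite /avg -mulr_suml mulrA. Qed.

Lemma avg_sum (T I : finType) (P : pred I) (F : I -> T -> R) :
  avg (fun x => \sum_(i | P i) F i x) = \sum_(i | P i) avg (F i).
Proof. by rewrite /avg exchange_big mulr_sumr. Qed.

Lemma avg_ler (T : finType) (f g : T -> R) :
  (forall x, f x <= g x) -> avg f <= avg g.
Proof.
move=> H; rewrite /avg ler_wpM2l ?invr_ge0 ?ler0n //.
by apply: ler_sum => x _; apply: H.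
Qed.

Lemma avg_ge0 (T : finType) (f : T -> R) : (forall x, 0 <= f x) -> 0 <= avg f.
Proof. by move=> H; rewrite /avg mulr_ge0 ?invr_ge0 ?ler0n ?sumr_ge0. Qed.

Lemma avg_abs (T : finType) (f : T -> R) : `|avg f| <= avg (fun x => `|f x|).
Proof.
rewrite /avg normrM ger0_norm ?invr_ge0 ?ler0n //.
by rewrite ler_wpM2l ?invr_ge0 ?ler0n ?ler_norm_sum.
Qed.

Lemma avg_cst (T : finType) (c : R) : (0 < #|T|)%N -> avg (fun _ : T => c) = c.
Proof.
move=> H; rewrite /avg sumr_const.
have -> : #|[pred x : T | true]| = #|T| by apply: eq_card.
rewrite -[c *+ _]mulr_natl mulrA mulVf ?mul1r //.
by rewrite pnatr_eq0 -lt0n.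
Qed.

Lemma avg_le_cst (T : finType) (f : T -> R) c :
  (0 < #|T|)%N -> (forall x, f x <= c) -> avg f <= c.
Proof. by move=> H1 H2; rewrite -(avg_cst c H1); apply: avg_ler. Qed.

Lemma avg_exch (T1 T2 : finType) (f : T1 -> T2 -> R) :
  avg (fun x => avg (fun y => f x y)) = avg (fun y => avg (fun x => f x y)).
Proof.
rewrite /avg !mulr_sumr.
under eq_bigr do rewrite !mulr_sumr.
under [RHS]eq_bigr do rewrite !mulr_sumr.
rewrite exchange_big; apply: eq_bigr => y _; apply: eq_bigr => x _; exact: mulrCA.
Qed.

Lemma avg_reindex (T : finType) (e : T -> T) (f : T -> R) :
  bijective e -> avg (fun x => f (e x)) = avg f.
Proof.
by move=> He; rewrite /avg [in RHS](reindex e) //; apply: onW_bij.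
Qed.

Lemma avg_eq (T : finType) (f g : T -> R) : (forall x, f x = g x) -> avg f = avg g.
Proof. by move=> H; rewrite /avg; congr (_ * _); apply: eq_bigr => x _. Qed.

Lemma prod_avg (m : nat) (J : finType) (F : 'I_m -> J -> R) :
  \prod_(j < m) avg (F j) = avg (fun b : {ffun 'I_m -> J} => \prod_(j < m) F j (b j)).
Proof.
rewrite /avg big_split /= bigA_distr_bigA /= prodr_const card_ffun card_ord.
by rewrite natrX exprVn.
Qed.

End Avg.

Section Shift.
Variable R : realType.
Variable T : finZmodType.

Lemma avg_shift (a : T) (f : T -> R) : avg (fun t => f (a + t)) = avg f.
Proof.
by apply: (avg_reindex (e := fun t => a + t)); exists (fun t => - a + t) => t;
  rewrite addrA ?addNr ?subrr add0r.
Qed.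

Lemma avg_shiftr (a : T) (f : T -> R) : avg (fun t => f (t + a)) = avg f.
Proof. by rewrite -(avg_shift a); apply: avg_eq => t; rewrite addrC. Qed.

Lemma avg_neg (f : T -> R) : avg (fun t => f (- t)) = avg f.
Proof. by apply: (avg_reindex (e := fun t => - t)); exists (fun t => - t) => t; rewrite opprK. Qed.

End Shift.


Definition fext (X : Type) (d : nat) (H : {ffun 'I_d -> X}) (h : X) : {ffun 'I_d.+1 -> X} :=
  [ffun i => if unlift ord_max i is Some j then H j else h].

Definition frestr (X : Type) (d : nat) (H : {ffun 'I_d.+1 -> X}) : {ffun 'I_d -> X} :=
  [ffun j => H (lift ord_max j)].

Lemma fext_lift (X : Type) d (H : {ffun 'I_d -> X}) h j : fext H h (lift ord_max j) = H j.
Proof. by rewrite ffunE liftK. Qed.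

Lemma fext_widen (X : Type) d (H : {ffun 'I_d -> X}) h j :
  fext H h (widen_ord (leqnSn d) j) = H j.
Proof.
have -> : widen_ord (leqnSn d) j = lift ord_max j by by apply: val_inj; rewrite /= /bump leqNgt ltn_ord.
exact: fext_lift.
Qed.

Lemma fext_max (X : Type) d (H : {ffun 'I_d -> X}) h : fext H h ord_max = h.
Proof. by rewrite ffunE unlift_none. Qed.

Lemma fextK (X : Type) d (H : {ffun 'I_d.+1 -> X}) : fext (frestr H) (H ord_max) = H.
Proof.
apply/ffunP => i; rewrite ffunE; case: unliftP => [j ->|->] //.
by rewrite ffunE.
Qed.

Lemma big_fext (S : Type) (idx : S) (op : Monoid.com_law idx) (X : finType) d
  (F : {ffun 'I_d.+1 -> X} -> S) :
  \big[op/idx]_H F H = \big[op/idx]_(H' : {ffun 'I_d -> X}) \big[op/idx]_(h : X) F (fext H' h).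
Proof.
rewrite pair_big /=.
rewrite (reindex (fun p : {ffun 'I_d -> X} * X => fext p.1 p.2)) //.
apply: onW_bij; exists (fun H => (frestr H, H ord_max)).
  move=> [H' h] /=; congr (_, _); last by rewrite fext_max.
  by apply/ffunP => j; rewrite ffunE fext_lift.
by move=> H; rewrite /= fextK.
Qed.

Lemma card_ffunS (X : finType) d :
  #|{ffun 'I_d.+1 -> X}| = (#|{ffun 'I_d -> X}| * #|X|)%N.
Proof. by rewrite !card_ffun !card_ord expnSr. Qed.

Lemma avg_fext (R : realType) (X : finType) d (F : {ffun 'I_d.+1 -> X} -> R) :
  avg F = avg (fun H' : {ffun 'I_d -> X} => avg (fun h : X => F (fext H' h))).
Proof.
rewrite /avg big_fext card_ffunS natrM invfM -mulrA; congr (_ * _).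
by rewrite mulr_sumr.
Qed.

Lemma cube_pt_fext (G : zmodType) d (x : G) (H : {ffun 'I_d -> G}) h w b :
  cube_pt x (fext H h) (fext w b) = cube_pt x H w + (if b then h else 0).
Proof.
rewrite /cube_pt big_mkcond big_ord_recr /= fext_max fext_max -addrA; congr (_ + _).
rewrite [in RHS]big_mkcond; congr (_ + _); apply: eq_bigr => i _.
by rewrite !fext_widen.
Qed.

Section GCS.
Variable R : realType.
Variable T : finZmodType.

Definition Sc d (G : {ffun 'I_d -> bool} -> T -> R) : R :=
  avg (fun x : T => avg (fun H : {ffun 'I_d -> T} => \prod_w G w (cube_pt x H w))).

Definition Gh d (G : {ffun 'I_d.+1 -> bool} -> T -> R) (h : T) :
  {ffun 'I_d -> bool} -> T -> R :=
  fun w y => G (fext w false) y * G (fext w true) (y + h).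

Lemma L1 d (G : {ffun 'I_d.+1 -> bool} -> T -> R) :
  Sc G = avg (fun h => Sc (Gh G h)).
Proof.
transitivity (avg (fun x => avg (fun H' : {ffun 'I_d -> T} => avg (fun h =>
   \prod_w' Gh G h w' (cube_pt x H' w'))))).
  rewrite /Sc; apply: avg_eq => x; rewrite avg_fext; apply: avg_eq => H'.
  apply: avg_eq => h; rewrite big_fext; apply: eq_bigr => w' _.
  by rewrite big_bool /= !cube_pt_fext addr0 /Gh mulrC.
rewrite /Sc [RHS]avg_exch; apply: avg_eq => x; exact: avg_exch.
Qed.

Definition uf d (f : T -> R) (H' : {ffun 'I_d -> T}) : R :=
  avg (fun x => \prod_w f (cube_pt x H' w)).

Lemma cube_pt_add d (x h : T) (H : {ffun 'I_d -> T}) w :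
  cube_pt x H w + h = cube_pt (x + h) H w.
Proof. by rewrite /cube_pt addrAC. Qed.

Lemma L2a d (f g : T -> R) :
  avg (fun h => gowers_avg d (fun y => f y * g (y + h))) =
  avg (fun H' : {ffun 'I_d -> T} => uf f H' * uf g H').
Proof.
rewrite /gowers_avg.
transitivity (avg (fun x => avg (fun H' : {ffun 'I_d -> T} => avg (fun h =>
   (\prod_w f (cube_pt x H' w)) * \prod_w g (cube_pt (x + h) H' w))))).
  rewrite avg_exch; apply: avg_eq => x; rewrite avg_exch; apply: avg_eq => H'.
  apply: avg_eq => h; rewrite -big_split /=; apply: eq_bigr => w _.
  by rewrite cube_pt_add.
rewrite avg_exch; apply: avg_eq => H'; rewrite /uf -avgZr; apply: avg_eq => x.
by rewrite avgZ (avg_shift x (fun y => \prod_w g (cube_pt y H' w))).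
Qed.


Lemma L2b d (f : T -> R) : gowers_avg d.+1 f = avg (fun H' : {ffun 'I_d -> T} => uf f H' ^+ 2).
Proof.
rewrite (_ : gowers_avg d.+1 f = Sc (fun _ : {ffun 'I_d.+1 -> bool} => f)) // L1 -(L2a d f f).
by apply: avg_eq => h.
Qed.

Lemma normM_le (a b : R) : `|a * b| <= (a ^+ 2 + b ^+ 2) / 2.
Proof.
rewrite normrM -(real_normK (num_real a)) -(real_normK (num_real b)).
have := sqr_ge0 (`|a| - `|b|).
move: (`|a|) (`|b|) => x y H; nra.
Qed.

Lemma L2 d (f g : T -> R) :
  `|avg (fun h => gowers_avg d (fun y => f y * g (y + h)))| <=
  (gowers_avg d.+1 f + gowers_avg d.+1 g) / 2.
Proof.
rewrite L2a !L2b -avgD -avgZr; apply: le_trans (avg_abs _) _.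
by apply: avg_ler => H'; apply: normM_le.
Qed.

Lemma avg_bool (f : bool -> R) : avg f = (f true + f false) / 2.
Proof. by rewrite /avg big_bool card_bool mulrC. Qed.

Lemma card_ffun_gt0 (X Y : finType) (y : Y) : (0 < #|{ffun X -> Y}|)%N.
Proof. by apply/card_gt0P; exists [ffun=> y]. Qed.

Lemma GCS_red d (G : {ffun 'I_d.+1 -> bool} -> T -> R) :
  avg (fun w' : {ffun 'I_d -> bool} => `|avg (fun h => gowers_avg d (Gh G h w'))|)
  <= avg (fun w => gowers_avg d.+1 (G w)).
Proof.
rewrite avg_fext.
under [X in _ <= X]avg_eq => w' do rewrite avg_bool addrC.
by apply: avg_ler => w'; apply: L2.
Qed.

Lemma GCS d (G : {ffun 'I_d.+1 -> bool} -> T -> R) :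
  `|Sc G| <= avg (fun w => gowers_avg d.+1 (G w)).
Proof.
elim: d G => [|d IH] G; apply: le_trans (GCS_red G); rewrite L1.
  have E : forall h, Sc (Gh G h) = avg (fun w' : {ffun 'I_0 -> bool} => gowers_avg 0 (Gh G h w')).
    move=> h; rewrite -[LHS](@avg_cst R {ffun 'I_0 -> bool} _ (card_ffun_gt0 _ true)).
    apply: avg_eq => w'.
    rewrite /Sc /gowers_avg; apply: avg_eq => x; apply: avg_eq => H.
    apply: eq_bigr => w _; congr (Gh G h _ _); apply/ffunP => -[m Hm].
    by exfalso; rewrite ltn0 in Hm.
  under avg_eq => h do rewrite E.
  by rewrite avg_exch; apply: le_trans (avg_abs _) _.
apply: le_trans (avg_abs _) _.
apply: le_trans (_ : avg (fun h => avg (fun w' => gowers_avg d.+1 (Gh G h w'))) <= _).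
  by apply: avg_ler => h; apply: IH.
rewrite avg_exch; apply: avg_ler => w'; exact: ler_norm.
Qed.
End GCS.


Section Cube.
Variable R : realType.
Variable T : finZmodType.

Lemma cube_pt0w d (x : T) (H : {ffun 'I_d -> T}) : cube_pt x H [ffun=> false] = x.
Proof. by rewrite /cube_pt big1 ?addr0 // => i; rewrite ffunE. Qed.

Lemma cube_ptE d (x : T) (H : {ffun 'I_d -> T}) w : cube_pt x H w = x + cube_pt 0 H w.
Proof. by rewrite /cube_pt add0r. Qed.

Lemma cube_pt_addH d (x : T) (H H2 : {ffun 'I_d -> T}) w :
  cube_pt x [ffun i => H i + H2 i] w = cube_pt x H w + cube_pt 0 H2 w.
Proof.
rewrite /cube_pt add0r -addrA; congr (_ + _).
by rewrite -big_split; apply: eq_bigr => i _; rewrite ffunE.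
Qed.

Lemma cube_pt_e d (t : T) (c : 'I_d) w :
  cube_pt 0 [ffun i => if i == c then t else 0] w = if w c then t else 0.
Proof.
rewrite /cube_pt add0r; case hw: (w c).
  rewrite (bigD1 c) //= ffunE eqxx big1 ?addr0 // => i /andP[_ /negbTE ne].
  by rewrite ffunE ne.
rewrite big1 // => i wi; rewrite ffunE; case: eqP => // ei.
by rewrite ei hw in wi.
Qed.

Lemma avg_ffun_shift d (f : {ffun 'I_d -> T} -> R) (E : {ffun 'I_d -> T}) :
  avg (fun H : {ffun 'I_d -> T} => f [ffun i => H i + E i]) = avg f.
Proof.
apply: (avg_reindex (e := fun H : {ffun 'I_d -> T} => [ffun i => H i + E i])).
exists (fun H : {ffun 'I_d -> T} => [ffun i => H i - E i]) => H;
  by apply/ffunP => i; rewrite !ffunE ?addrK ?subrK.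
Qed.

Lemma avg_cube_diff d (w w' : {ffun 'I_d -> bool}) (f : T -> R) :
  w != w' ->
  avg (fun H : {ffun 'I_d -> T} => f (cube_pt 0 H w - cube_pt 0 H w')) = avg f.
Proof.
move=> ww.
have [c Hc] : exists c, w c != w' c.
  apply/existsP; rewrite -negb_forall; apply: contra ww => /forallP Hf.
  by apply/eqP/ffunP => i; apply/eqP.
pose D := fun H : {ffun 'I_d -> T} => cube_pt 0 H w - cube_pt 0 H w'.
have step : forall t, avg (fun H => f (D H)) =
    avg (fun H => f (D H + ((if w c then t else 0) - (if w' c then t else 0)))).
  move=> t; rewrite -(avg_ffun_shift _ [ffun i => if i == c then t else 0]).
  apply: avg_eq => H; congr f; rewrite /D !cube_pt_addH !cube_pt_e.
  by rewrite opprD addrACA.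
rewrite -(@avg_cst R T (avg (fun H => f (D H)))); last by apply/card_gt0P; exists 0.
under avg_eq => t do rewrite (step t).
rewrite avg_exch -[RHS](@avg_cst R {ffun 'I_d -> T} (avg f)); last first.
  exact: (card_ffun_gt0 _ 0).
apply: avg_eq => H.
move: Hc; case: (w c); case: (w' c) => // _.
  by rewrite (avg_eq (g := fun t => f (D H + t))) ?avg_shift // => t; rewrite subr0.
have := avg_neg (fun s => f (D H + s)); rewrite avg_shift => <-.
by apply: avg_eq => t; rewrite sub0r.
Qed.
End Cube.


Section Key.
Variable R : realType.
Variable T : finZmodType.

Definition Gb d m (phi : 'I_m -> T -> R) (h : T -> R)
  (b : {ffun 'I_m -> {ffun 'I_d -> T}}) (w : {ffun 'I_d -> bool}) : T -> R :=
  fun y => if w == [ffun=> false] then h y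
           else \prod_(j < m) phi j (y + cube_pt 0 (b j) w).

Definition bH d m (H : {ffun 'I_d -> T}) (b : {ffun 'I_m -> {ffun 'I_d -> T}}) :
  {ffun 'I_m -> {ffun 'I_d -> T}} := [ffun j => [ffun i => H i + b j i]].

Lemma bH_bij d m (H : {ffun 'I_d -> T}) : bijective (@bH d m H).
Proof.
exists (fun b : {ffun 'I_m -> {ffun 'I_d -> T}} => [ffun j => [ffun i => b j i - H i]]) => b.
  by apply/ffunP => j; apply/ffunP => i; rewrite !ffunE (addrC (H i)) addrK.
by apply/ffunP => j; apply/ffunP => i; rewrite !ffunE (addrC (H i)) subrK.
Qed.

Lemma key_expand d m (phi : 'I_m -> T -> R) (h : T -> R) :
  inner (fun x => \prod_(j < m) dual_fun d (phi j) x) h =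
  avg (fun b : {ffun 'I_m -> {ffun 'I_d -> T}} => Sc (Gb phi h b)).
Proof.
rewrite /inner /dual_fun.
under avg_eq => x do rewrite prod_avg.
transitivity (avg (fun x => avg (fun H : {ffun 'I_d -> T} =>
   avg (fun b : {ffun 'I_m -> {ffun 'I_d -> T}} => \prod_w Gb phi h b w (cube_pt x H w))))).
  apply: avg_eq => x.
  rewrite -[LHS](@avg_cst R {ffun 'I_d -> T} _ (card_ffun_gt0 _ 0)); apply: avg_eq => H.
  rewrite -avgZr -[LHS](avg_reindex _ (bH_bij m H)); apply: avg_eq => b.
  rewrite (bigD1 [ffun=> false]) //= {1}/Gb eqxx cube_pt0w mulrC; congr (_ * _).
  rewrite exchange_big /=; apply: eq_bigr => w hw; rewrite /Gb (negbTE hw).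
  by apply: eq_bigr => j _; rewrite ffunE cube_pt_addH.
under avg_eq => x do rewrite avg_exch.
by rewrite avg_exch.
Qed.

Definition Wf d (nu : T -> R) (H : {ffun 'I_d -> T}) : R :=
  avg (fun t => \prod_w' nu (t + cube_pt 0 H w')).

Lemma key_bound d m (phi : 'I_m -> T -> R) (h : T -> R) (nu : T -> R) w :
  w != [ffun=> false] -> (forall j x, 0 <= phi j x <= nu x) ->
  avg (fun b : {ffun 'I_m -> {ffun 'I_d -> T}} => gowers_avg d (Gb phi h b w))
  <= avg (fun H : {ffun 'I_d -> T} => Wf nu H ^+ m).
Proof.
move=> hw Hphi.
have E : forall (x : T) (H : {ffun 'I_d -> T}), avg (fun a : {ffun 'I_d -> T} =>
    \prod_w' nu (cube_pt x H w' + cube_pt 0 a w)) = Wf nu H.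
  move=> x H.
  pose Fs := fun s => \prod_w' nu (cube_pt x H w' + s).
  transitivity (avg (fun a : {ffun 'I_d -> T} => Fs (cube_pt 0 a w - cube_pt 0 a [ffun=> false]))).
    by apply: avg_eq => a; rewrite cube_pt0w subr0.
  rewrite avg_cube_diff // /Wf -[RHS](avg_shift x); apply: avg_eq => t.
  by apply: eq_bigr => w' _; rewrite cube_ptE addrAC.
apply: le_trans (_ : avg (fun b : {ffun 'I_m -> {ffun 'I_d -> T}} => avg (fun x =>
   avg (fun H : {ffun 'I_d -> T} =>
   \prod_(j < m) \prod_w' nu (cube_pt x H w' + cube_pt 0 (b j) w)))) <= _).
  apply: avg_ler => b; rewrite /gowers_avg /Gb (negbTE hw).
  apply: avg_ler => x; apply: avg_ler => H.
  rewrite [X in _ <= X]exchange_big /=; apply: ler_prod => w' _.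
  apply/andP; split.
    by apply: prodr_ge0 => j _; case/andP: (Hphi j (cube_pt x H w' + cube_pt 0 (b j) w)).
  by apply: ler_prod => j _; apply: Hphi.
rewrite avg_exch; under avg_eq => x do rewrite avg_exch.
under avg_eq => x do under avg_eq => H do
  rewrite -(prod_avg (fun (_ : 'I_m) (a : {ffun 'I_d -> T}) =>
    \prod_w' nu (cube_pt x H w' + cube_pt 0 a w))) E prodr_const card_ord.
by rewrite avg_cst //; apply/card_gt0P; exists 0.
Qed.

End Key.

Section Pow.
Variable R : realType.

Lemma sum2pow (x y : R) m : 0 <= x -> 0 <= y -> (x + y) ^+ m <= 2 ^+ m * (x ^+ m + y ^+ m).
Proof.
move=> hx hy; case: (leP x y) => hxy.
  apply: le_trans (_ : (2 * y) ^+ m <= _).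
    by apply: lerXn2r; rewrite ?nnegrE; lra.
  rewrite exprMn; apply: ler_wpM2l; first exact: exprn_ge0.
  by rewrite lerDr exprn_ge0.
apply: le_trans (_ : (2 * x) ^+ m <= _).
  by apply: lerXn2r; rewrite ?nnegrE; lra.
rewrite exprMn; apply: ler_wpM2l; first exact: exprn_ge0.
by rewrite lerDl exprn_ge0.
Qed.

Lemma powsum (I : Type) (r : seq I) (P : pred I) (a : I -> R) m :
  (0 < m)%N -> (forall i, P i -> 0 <= a i) ->
  (\sum_(i <- r | P i) a i) ^+ m <= (2 ^+ m) ^+ (size r) * \sum_(i <- r | P i) a i ^+ m.
Proof.
move=> m0 Ha; elim: r => [|x r IH].
  by rewrite !big_nil mulr0 expr0n gtn_eqF.
have c1 : 1 <= (2 ^+ m : R) ^+ (size r) by rewrite exprn_ege1 // exprn_ege1 // ler1n.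
have S0 : 0 <= \sum_(i <- r | P i) a i by apply: sumr_ge0.
have S0' : 0 <= \sum_(i <- r | P i) a i ^+ m by apply: sumr_ge0 => i Pi; rewrite exprn_ge0 ?Ha.
rewrite !big_cons /= exprS; case: (boolP (P x)) => Px.
  apply: le_trans (sum2pow m (Ha x Px) S0) _.
  rewrite -mulrA; apply: ler_wpM2l; first exact: exprn_ge0.
  rewrite mulrDr.
  apply: lerD; last exact: IH.
  by rewrite ler_peMl ?exprn_ge0 ?Ha.
apply: le_trans IH _; apply: ler_wpM2r => //.
rewrite ler_peMl ?exprn_ge0 //.
by rewrite exprn_ege1 // ler1n.
Qed.
End Pow.

Unset Implicit Arguments. Set Strict Implicit. Set Printing Implicit Defensive.


Lemma prod_enum (R : realType) (X : finType) (F : X -> R) :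
  \prod_(x : X) F x = \prod_(i < #|X|) F (enum_val i).
Proof. by rewrite -big_enum_val. Qed.

Theorem mainTheorem14 (R : realType) (F : finFieldType) (k : nat)
  (P : nat -> {poly F}) (nu : forall N : nat, {poly %/ (P N)} -> R) :
  (0 < k)%N ->
  (forall N : nat, (0 < N)%N ->
     [/\ irreducible_poly (P N), P N \is monic & size (P N) = N.+1]) ->
  pseudorandom k nu ->
  forall m : nat, (1 <= m)%N ->
  exists C : R, forall N : nat, (0 < N)%N ->
  forall phi : 'I_m -> {poly %/ (P N)} -> R,
    (forall i x, 0 <= phi i x <= nu N x) ->
    let g := (fun x : {poly %/ (P N)} =>
                \prod_(i < m) dual_fun ((#|F| ^ k)%N - 1) (phi i) x) in
    (dual_norm ((#|F| ^ k)%N - 1) g <= C%:E)%E.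
Proof.
move=> k0 _ HP m m1.
move: HP; rewrite /pseudorandom /correlation_cond /= => -[nu0 _ [tau [tau0 tauM tauC]]].
have Kgt : (1 < #|F| ^ k)%N.
  by rewrite -[1%N](exp1n k) ltn_exp2r // card_finNzRing_gt1.
have [d' Hd] : exists d', (#|F| ^ k - 1)%N = d'.+1 by exists (#|F| ^ k - 2)%N; lia.
rewrite Hd in tauC; rewrite Hd.
set l := #|{ffun 'I_d'.+1 -> bool}|.
have Hl : l = (2 ^ d'.+1)%N by rewrite /l card_ffun card_bool card_ord.
have [Cp HCp] := tauM (m.+1)%:R (ltac:(by rewrite ltr1n ltnS)).
set c := (2 : R) ^+ m.
set s := size (index_enum 'I_l).
pose C1 := c ^+ s * \sum_(i < l) (c ^+ s * \sum_(j < l | (i < j)%N) (1 + Num.max Cp 0)).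
have c0 : 0 <= c by rewrite /c exprn_ge0.
have C1ge0 : 0 <= C1.
  rewrite /C1 mulr_ge0 ?exprn_ge0 ?sumr_ge0 // => i _.
  rewrite mulr_ge0 ?exprn_ge0 ?sumr_ge0 // => j _.
  by rewrite addr_ge0 // le_max lexx orbT.
exists (1 + C1) => N N0 phi Hphi.
rewrite /dual_norm; apply: ge_ereal_sup => _ [hh /= Hh <-]; rewrite lee_fin.
have Ah : gowers_avg d'.+1 hh <= 1.
  rewrite leNgt; apply/negP => Ha; move: Hh; apply/negP; rewrite -ltNge.
  rewrite /gowers_norm /powR gt_eqF ?(lt_trans ltr01 Ha) //.
  by rewrite expR_gt1 mulr_gt0 ?invr_gt0 ?ltr0n ?expn_gt0 // ln_gt0.
rewrite key_expand.
apply: le_trans (avg_abs _) _.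
apply: le_trans (_ : avg (fun b : {ffun 'I_m -> {ffun 'I_d'.+1 -> {poly %/ P N}}} =>
   avg (fun w => gowers_avg d'.+1 (Gb phi hh b w))) <= _).
  by apply: avg_ler => b; apply: GCS.
rewrite avg_exch; apply: avg_le_cst; first exact: (card_ffun_gt0 _ true).
move=> w; case: (eqVneq w [ffun=> false]) => [->|hw].
  rewrite (avg_eq (g := fun _ => gowers_avg d'.+1 hh)); last first.
    by move=> b; congr gowers_avg; apply: funext => y; rewrite /Gb eqxx.
  rewrite avg_cst; last exact: (card_ffun_gt0 _ [ffun=> 0]).
  lra.
apply: le_trans (@key_bound _ _ _ _ phi hh (nu N) w hw Hphi) _.
suff : avg (fun H : {ffun 'I_d'.+1 -> {poly %/ P N}} => Wf (nu N) H ^+ m) <= C1 by lra.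
have HW : forall H : {ffun 'I_d'.+1 -> {poly %/ P N}}, Wf (nu N) H <=
    \sum_(i < l) \sum_(j < l | (i < j)%N)
      tau N (cube_pt 0 H (enum_val i) - cube_pt 0 H (enum_val j)).
  move=> H.
  have Hl2 : (2 <= l <= 2 ^ d'.+1)%N.
    by rewrite Hl leqnn andbT -[2%N]expn1 leq_exp2l.
  have := tauC N N0 l Hl2 (fun i => cube_pt 0 H (enum_val i)).
  suff -> : Wf (nu N) H = avg (fun f : {poly %/ P N} =>
      \prod_(i < l) nu N (f + cube_pt 0 H (enum_val i))) by [].
  by apply: avg_eq => t; rewrite (@prod_enum R _ (fun w' => nu N (t + cube_pt 0 H w'))).
have W0 : forall H : {ffun 'I_d'.+1 -> {poly %/ P N}}, 0 <= Wf (nu N) H.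
  by move=> H; apply: avg_ge0 => t; apply: prodr_ge0 => w' _; apply: nu0.
have tauD : forall (i j : 'I_l), (i < j)%N ->
    avg (fun H : {ffun 'I_d'.+1 -> {poly %/ P N}} =>
      tau N (cube_pt 0 H (enum_val i) - cube_pt 0 H (enum_val j)) ^+ m)
    <= 1 + Num.max Cp 0.
  move=> i j ij.
  have nij : enum_val i != enum_val j.
    by apply/eqP => /enum_val_inj eij; rewrite eij ltnn in ij.
  rewrite (avg_cube_diff (fun t => tau N t ^+ m) nij).
  apply: le_trans (_ : avg (fun t => 1 + powR (tau N t) (m.+1)%:R) <= _).
    apply: avg_ler => t; rewrite powR_mulrn ?tau0 //.
    case: (leP (tau N t) 1) => ht.
      apply: le_trans (exprn_ile1 _ (tau0 N t) ht) _.
      by rewrite lerDl exprn_ge0 ?tau0.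
    apply: le_trans (_ : tau N t ^+ m.+1 <= _); last by rewrite lerDr.
    by rewrite ler_eXn2l.
  rewrite avgD avg_cst; last by apply/card_gt0P; exists 0.
  rewrite lerD2l; apply: le_trans (HCp N N0) _; by rewrite le_max lexx.
apply: le_trans (_ : avg (fun H : {ffun 'I_d'.+1 -> {poly %/ P N}} =>
   c ^+ s * \sum_(i < l) (c ^+ s * \sum_(j < l | (i < j)%N)
      tau N (cube_pt 0 H (enum_val i) - cube_pt 0 H (enum_val j)) ^+ m)) <= _).
  apply: avg_ler => H.
  apply: le_trans (_ : (\sum_(i < l) \sum_(j < l | (i < j)%N)
      tau N (cube_pt 0 H (enum_val i) - cube_pt 0 H (enum_val j))) ^+ m <= _).
    by apply: lerXn2r; rewrite ?nnegrE ?W0 ?HW //; apply: sumr_ge0 => i _;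
      apply: sumr_ge0 => j _; apply: tau0.

  apply: le_trans (powsum _ _ _) _ => //.
    by move=> i _; apply: sumr_ge0 => j _; apply: tau0.
  apply: ler_wpM2l; first exact: exprn_ge0.
  apply: ler_sum => i _; apply: le_trans (powsum _ _ _) _ => //.
rewrite avgZ avg_sum; apply: ler_wpM2l; first exact: exprn_ge0.
apply: ler_sum => i _; rewrite avgZ avg_sum; apply: ler_wpM2l; first exact: exprn_ge0.
by apply: ler_sum => j ij; apply: tauD.
Qed.
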